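(* Let $\beta>1$ be a root of an irreducible monic polynomial $p\in\mathbb Z[x]$ of degree $d>1$, with Galois conjugates $\beta_2,\dots,\beta_d$. Let $E=[0,B)$ and let $F:E\to E$ be a generalized $\beta$-transformation, i.e. there are $0=x_0<x_1<\dots<x_l=B$ and $y_1,\dots,y_l$ with $\beta I_j-y_j\subseteq E$ and $F(x)=\beta x-y_j$ for $x\in I_j=[x_{j-1},x_j)$, and assume $x_0,\dots,x_l,y_1,\dots,y_l\in\mathbb{Q}(\beta)$. Then: (1) If $|\beta_j|<1$ for all $j=2,\dots,d$, then for every $x\in\mathbb{Q}(\beta)\cap E$ the orbit $\{F^n(x):n\ge0\}$ is finite, hence eventually periodic. (2) If $|\beta_j|>1$ for some $j\in\{2,\dots,d\}$, then there exists $x\in\mathbb{Q}(\beta)\cap E$ whose orbit under $F$ is infinite. *)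

(* Defs.v *)
From HB Require Import structures.
From mathcomp Require Import all_boot all_order all_algebra.
From mathcomp Require Import complex.
From mathcomp Require Import boolp classical_sets reals.
Set Implicit Arguments. Unset Strict Implicit. Unset Printing Implicit Defensive.
Import Order.TTheory GRing.Theory Num.Theory.
Local Open Scope ring_scope.

Definition inQbeta (R : realType) (beta x : R) : Prop :=
  exists q : {poly rat}, x = (map_poly (ratr : rat -> R) q).[beta].

Definition gen_beta_transf (R : realType) (beta B : R) (l : nat)
    (xs ys : nat -> R) (F : R -> R) : Prop :=
  [/\ (0 < l)%N, xs 0%N = 0, xs l = B,
      (forall j, (j < l)%N -> xs j < xs j.+1) &
      (forall j t, (1 <= j <= l)%N -> xs j.-1 <= t -> t < xs j ->
          0 <= beta * t - ys j /\ beta * t - ys j < B /\ F t = beta * t - ys j)].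

(* Main.v *)
Require Import Defs.
From HB Require Import structures.
From mathcomp Require Import all_boot all_order all_algebra.
From mathcomp Require Import complex.
From mathcomp Require Import boolp classical_sets cardinality reals.
From mathcomp Require Import separable.
From mathcomp Require Import ring lra.
Import Order.TTheory GRing.Theory Num.Theory.
Local Open Scope ring_scope.
Set Implicit Arguments. Unset Strict Implicit.
Local Open Scope classical_set_scope.

Lemma map_int_rat (F : numFieldType) (c : {poly int}) :
  map_poly (ratr : rat -> F) (map_poly (intr : int -> rat) c) = map_poly intr c.
Proof. by rewrite -map_poly_comp; apply: eq_map_poly => x /=; rewrite ratr_int. Qed.

Lemma wd_root (R : realType) (p : {poly int}) (beta : R) (q : {poly rat}) :
  irreducible_poly (map_poly (intr : int -> rat) p) ->
  root (map_poly (intr : int -> R) p) beta ->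
  (map_poly ratr q).[beta] = 0 ->
  forall z : R[i], root (map_poly (intr : int -> R[i]) p) z ->
  (map_poly ratr q).[z] = 0.
Proof.
move=> irr rb qb z rz.
set pQ := map_poly (intr : int -> rat) p.
have pQd : pQ %| q.
  have g1 : size (gcdp pQ q) != 1.
    apply/negP => /eqP g1.
    have : root (map_poly (ratr : rat -> R) (gcdp pQ q)) beta.
      by rewrite gcdp_map root_gcd /pQ map_int_rat rb /root qb eqxx.
    have nz : map_poly (ratr : rat -> R) (gcdp pQ q) != 0.
      by rewrite -size_poly_eq0 size_map_poly g1.
    by move/(root_size_gt1 nz); rewrite size_map_poly g1.
  have := irr.2 _ g1 (dvdp_gcdl _ _).
  by move=> geq; rewrite -(eqp_dvdl _ geq) dvdp_gcdr.
rewrite -(divpK pQd) rmorphM /= hornerM /pQ map_int_rat.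
by move/eqP: rz => ->; rewrite mulr0.
Qed.

Lemma separable_pQ (p : {poly int}) :
  irreducible_poly (map_poly (intr : int -> rat) p) ->
  separable_poly (map_poly (intr : int -> rat) p).
Proof.
move=> irr; set pQ := map_poly _ p.
have pQ0 : pQ != 0 by rewrite -size_poly_eq0 -lt0n (ltn_trans _ irr.1).
have d0 : pQ^`() != 0.
  apply/eqP => H.
  have := congr1 (fun r : {poly rat} => r`_((size pQ).-2)) H.
  rewrite /= coef_deriv coef0 => /eqP; rewrite mulrn_eq0.
  have -> : (size pQ).-2.+1 = (size pQ).-1.
    by have := irr.1; case: (size pQ) => [|[|n]].
  rewrite -lead_coefE lead_coef_eq0 (negPf pQ0) orbF.
  by have := irr.1; case: (size pQ) => [|[|n]].
rewrite unlock coprimep_def; apply/negPn/negP => g1.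
have := irr.2 _ g1 (dvdp_gcdl _ _) => geq.
have : pQ %| pQ^`() by rewrite -(eqp_dvdl _ geq) dvdp_gcdr.
move/(dvdp_leq d0); rewrite leqNgt lt_size_deriv //.
Qed.

Lemma roots_exist (R : realType) (p : {poly int}) :
  p \is monic ->
  irreducible_poly (map_poly (intr : int -> rat) p) ->
  exists rs : seq R[i], [/\ uniq rs, size rs = (size p).-1 &
    forall z, root (map_poly (intr : int -> R[i]) p) z = (z \in rs)].
Proof.
move=> mon irr.
have [r Hr] := closed_field_poly_normal (map_poly (intr : int -> R[i]) p).
have mC : map_poly (intr : int -> R[i]) p \is monic by exact: (monic_map (intr : {rmorphism int -> R[i]}) mon).
rewrite (monicP mC) scale1r in Hr.
exists r; split.
- have := @separable_pQ p irr.
  rewrite -(separable_map (ratr : {rmorphism rat -> R[i]})) map_int_rat Hr.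
  by rewrite separable_prod_XsubC.
- have := size_prod_XsubC r id; rewrite -Hr size_map_inj_poly //.
    by move=> ->.
  exact: intr_inj.
- by move=> z; rewrite Hr root_prod_XsubC.
Qed.

Lemma normC_real (R : realType) (a : R) : `|(a%:C)%C| = (`|a|%:C)%C.
Proof. by rewrite normc_def /= expr0n /= addr0 sqrtr_sqr. Qed.

Lemma ratrC (R : realType) (q : rat) : (ratr q : R[i]) = ((ratr q : R)%:C)%C.
Proof. by rewrite -(fmorph_rat (real_complex R : {rmorphism R -> R[i]})). Qed.

Lemma exists_nat_gtC (R : realType) (w : R[i]) : 0 <= w -> exists N : nat, w < N%:R.
Proof.
move=> w0; have /complex_realP[k wk] := ger0_real w0.
move: w0; rewrite wk ler0c => k0.
exists (Num.bound k).
rewrite -(rmorph_nat (real_complex R : {rmorphism R -> R[i]})) /= ltcR.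
exact: archi_boundP.
Qed.

Lemma approx_rat (R : realType) (beta e : R) : 0 < e ->
  exists q : rat, `|beta - ratr q| < e /\
    `|(beta%:C)%C - (ratr q : R[i])| = ((`|beta - ratr q|)%:C)%C.
Proof.
move=> e0.
have he : beta - e < beta + e by rewrite ltrBlDr -addrA ltrDl addr_gt0.
have [q] := @rat_in_itvoo R (beta - e) (beta + e) he.
rewrite in_itv /= => /andP[h1 h2]; exists q; split.
  by rewrite distrC ltr_distl h1 h2.
by rewrite ratrC -rmorphB normC_real.
Qed.

Lemma interval_index (R : realType) (beta B : R) l xs ys F :
  gen_beta_transf beta B l xs ys F -> forall t, 0 <= t -> t < B ->
  exists j, [/\ (1 <= j <= l)%N, xs j.-1 <= t & t < xs j].
Proof.
case=> l0 x0 xl _ _ t t0 tB.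
have ex : exists j, t < xs j by exists l; rewrite xl.
case: (ex_minnP ex) => j tj minj; exists j; split => //.
- apply/andP; split.
    by case: j tj {minj} => [|j]; rewrite // x0 ltNge t0.
  by move: (minj l); rewrite xl => /(_ tB).
- rewrite leNgt; apply/negP => /minj; case: j tj {minj} => [|j] /=.
    by rewrite x0 ltNge t0.
  by rewrite ltnn.
Qed.

Definition evR (R : realType) (beta : R) (q : {poly rat}) := (map_poly (ratr : rat -> R) q).[beta].
Definition evC (R : realType) (z : R[i]) (q : {poly rat}) := (map_poly (ratr : rat -> R[i]) q).[z].
Arguments evR {R}. Arguments evC {R}.

Lemma evR_step (R : realType) (beta : R) P Q : evR beta ('X * P - Q) = beta * evR beta P - evR beta Q.
Proof. by rewrite /evR rmorphB rmorphM /= map_polyX !hornerE. Qed.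

Lemma evC_step (R : realType) (z : R[i]) P Q : evC z ('X * P - Q) = z * evC z P - evC z Q.
Proof. by rewrite /evC rmorphB rmorphM /= map_polyX !hornerE. Qed.

Lemma step_lemma (R : realType) (beta B : R) l xs ys F (yq : nat -> {poly rat}) :
  gen_beta_transf beta B l xs ys F ->
  (forall j, (1 <= j <= l)%N -> ys j = evR beta (yq j)) ->
  forall P, 0 <= evR beta P -> evR beta P < B ->
  exists j, [/\ (1 <= j <= l)%N, 0 <= F (evR beta P), F (evR beta P) < B &
      F (evR beta P) = evR beta ('X * P - yq j)].
Proof.
move=> gb hy P t0 tB.
have [j [jl h1 h2]] := interval_index gb t0 tB.
case: gb => _ _ _ _ /(_ j (evR beta P) jl h1 h2) [a [b c]].
exists j; split => //; rewrite ?c //.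
by rewrite evR_step -hy.
Qed.

Lemma B_pos (R : realType) (beta B : R) l xs ys F :
  gen_beta_transf beta B l xs ys F -> 0 < B.
Proof.
case=> l0 x0 _ hx H.
have h1 : (1 <= 1 <= l)%N by rewrite leqnn l0.
have := hx 0%N l0; rewrite x0 => x1.
have h0 : xs 1%N.-1 <= 0 by rewrite x0.
have [a [b _]] := H 1%N 0 h1 h0 x1.
exact: le_lt_trans a b.
Qed.

Lemma injective_infinite (T : Type) (f : nat -> T) :
  injective f -> infinite_set (range f).
Proof.
move=> inj fin.
have := @finite_preimage nat T (range f) f (fun a b _ _ h => inj a b h) fin.
have -> : f @^-1` (range f) = setT.
  by apply/seteqP; split => // n _; exists n.
exact: infinite_nat.
Qed.

Lemma yq_exists (R : realType) (beta : R) l (ys : nat -> R) :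
  (forall j, (1 <= j <= l)%N -> inQbeta beta (ys j)) ->
  exists yq : nat -> {poly rat}, forall j, (1 <= j <= l)%N -> ys j = evR beta (yq j).
Proof.
move=> hy.
have : forall j, exists q : {poly rat}, (1 <= j <= l)%N -> ys j = evR beta q.
  move=> j; case: (boolP (1 <= j <= l)%N) => h.
    by have [q hq] := hy j h; exists q.
  by exists 0.
by case/choice => yq hyq; exists yq.
Qed.

Lemma growth_next (R : realType) (p : {poly int}) (beta B : R) l xs ys F
    (yq : nat -> {poly rat}) (z : R[i]) :
  gen_beta_transf beta B l xs ys F ->
  (forall j, (1 <= j <= l)%N -> ys j = evR beta (yq j)) ->
  exists nxt : {poly rat} -> {poly rat}, forall P,
    0 <= evR beta P -> evR beta P < B ->
    [/\ F (evR beta P) = evR beta (nxt P), 0 <= evR beta (nxt P),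
        evR beta (nxt P) < B &
        `|z| * `|evC z P| - \sum_(j < l.+1) `|evC z (yq j)| <= `|evC z (nxt P)|].
Proof.
move=> gb hyq.
have : forall P, exists P', 0 <= evR beta P -> evR beta P < B ->
    [/\ F (evR beta P) = evR beta P', 0 <= evR beta P',
        evR beta P' < B &
        `|z| * `|evC z P| - \sum_(j < l.+1) `|evC z (yq j)| <= `|evC z P'|].
  move=> P; case: (boolP (0 <= evR beta P)) => h0; last by exists 0.
  case: (boolP (evR beta P < B)) => h1; last by exists 0.
  have [j [jl a b e]] := step_lemma gb hyq h0 h1.
  exists ('X * P - yq j) => _ _; split => //; first by rewrite -e.
    by rewrite -e.
  rewrite evC_step.
  have jlt : (j < l.+1)%N by case/andP: jl.
  apply: le_trans (lerB_normD _ _); rewrite normrM lerB //.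
  rewrite normrN (bigD1 (Ordinal jlt)) //= lerDl.
  by apply: sumr_ge0 => i _.
by case/choice => nxt hn; exists nxt.
Qed.

Lemma part2 (R : realType) (p : {poly int}) (beta B : R) l xs ys F :
  irreducible_poly (map_poly (intr : int -> rat) p) ->
  root (map_poly (intr : int -> R) p) beta ->
  gen_beta_transf beta B l xs ys F ->
  (forall j, (j <= l)%N -> inQbeta beta (xs j)) ->
  (forall j, (1 <= j <= l)%N -> inQbeta beta (ys j)) ->
  forall z : R[i], root (map_poly (intr : int -> R[i]) p) z ->
  z != (beta%:C)%C -> 1 < `|z| ->
  exists x, [/\ inQbeta beta x, 0 <= x, x < B &
       infinite_set (range (fun n : nat => iter n F x))].
Proof.
move=> irr rb gb hx hy z rz zb z1.
have [yq hyq] := yq_exists hy.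
have B0 := B_pos gb.
have [Pb hPb] := hx l (leqnn l).
have xlB : xs l = B by case: gb.
set Y := \sum_(j < l.+1) `|evC z (yq j)|.
have Y0 : 0 <= Y by apply: sumr_ge0.
have z10 : 0 < `|z| - 1 by rewrite subr_gt0.
set K := Y / (`|z| - 1).
have K0 : 0 <= K by rewrite divr_ge0 // ltW.
set Pc := (2^-1 : rat)%:P * Pb.
have ePc : evR beta Pc = B / 2.
  rewrite /evR /Pc rmorphM /= map_polyC hornerE /= -hPb xlB.
  by rewrite fmorphV rmorph_nat mulrC.
set del := `|z - (beta%:C)%C|.
have d0 : 0 < del by rewrite normr_gt0 subr_eq0.
have [dr hdr] : exists dr : R, del = (dr%:C)%C.
  by apply/complex_realP; apply: ger0_real; apply: ltW.
have dr0 : 0 < dr by move: d0; rewrite hdr ltcR.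
have w0 : 0 <= 2 * (K + `|evC z Pc|) / del.
  apply: divr_ge0; last exact: ltW.
  by apply: mulr_ge0 => //; apply: addr_ge0.
have [N0 hN0] := exists_nat_gtC w0.
set N := N0.+1.
have hN : 2 * (K + `|evC z Pc|) / del < N%:R.
  by apply: lt_le_trans hN0 _; rewrite ler_nat.
have N0' : (0 : R) < N%:R by rewrite ltr0n.
set e := Num.min (B / 2 / N%:R) (dr / 2).
have e0 : 0 < e by rewrite lt_min !divr_gt0.
have [q [hq1 hq2]] := approx_rat beta e0.
set P0 := Pc + (N%:R : rat)%:P * ('X - q%:P).
have eR : evR beta P0 = B / 2 + N%:R * (beta - ratr q).
  rewrite /evR /P0 rmorphD rmorphM rmorphB /= map_polyX !map_polyC !hornerE /=.
  by rewrite -/(evR beta Pc) ePc rmorph_nat.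
have eC : evC z P0 = evC z Pc + N%:R * (z - ratr q).
  rewrite /evC /P0 rmorphD rmorphM rmorphB /= map_polyX !map_polyC !hornerE /=.
  by rewrite rmorph_nat.
have hu : `|N%:R * (beta - ratr q)| < B / 2.
  rewrite normrM normr_nat -ltr_pdivlMl // mulrC.
  by apply: lt_le_trans hq1 _; rewrite ge_min lexx.
have [x0 xB] : 0 <= evR beta P0 /\ evR beta P0 < B.
  rewrite eR; move: hu; rewrite ltr_norml => /andP[h1 h2].
  split; lra.
have hq3 : `|(beta%:C)%C - (ratr q : R[i])| <= del / 2.
  rewrite hq2 hdr -(rmorph_nat (real_complex R : {rmorphism R -> R[i]})) /=.
  rewrite -fmorph_div /= lecR; apply: ltW; apply: lt_le_trans hq1 _.
  by rewrite ge_min lexx orbT.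
have hzq : del / 2 <= `|z - ratr q|.
  have -> : z - ratr q = (z - (beta%:C)%C) + ((beta%:C)%C - ratr q) by rewrite addrA addrNK.
  apply: le_trans (lerB_normD _ _); rewrite -/del.
  apply: le_trans (lerB (lexx del) hq3).
  by rewrite {2}(splitr del) addrK.
have hK : K < `|evC z P0|.
  rewrite eC addrC; apply: lt_le_trans (lerB_normD _ _).
  rewrite normrM normr_nat ltrBrDr.
  apply: lt_le_trans (ler_wpM2l (ler0n _ _) hzq).
  move: hN; rewrite ltr_pdivrMr // => h.
  by rewrite mulrA ltr_pdivlMr ?ltr0n // mulrC.
have [nxt hn] := growth_next p z gb hyq.
set Pn := fun n => iter n nxt P0.
set x := evR beta P0.
have gr : forall a, K < a -> a < `|z| * a - Y.
  move=> a; rewrite /K ltr_pdivrMr // => h.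
  rewrite -subr_gt0; rewrite -subr_gt0 in h.
  suff -> : `|z| * a - Y - a = a * (`|z| - 1) - Y by [].
  ring.
have inv : forall n, [/\ iter n F x = evR beta (Pn n), 0 <= evR beta (Pn n),
    evR beta (Pn n) < B & K < `|evC z (Pn n)|].
  elim=> [|n [e1 e2 e3 e4]]; first by split.
  have [f1 f2 f3 f4] := hn (Pn n) e2 e3.
  split => //; first by rewrite iterS e1 f1.
  by apply: lt_le_trans f4; apply: lt_trans e4 (gr _ e4).
have mono : forall n, `|evC z (Pn n)| < `|evC z (Pn n.+1)|.
  move=> n; have [_ e2 e3 e4] := inv n.
  have [_ _ _ f4] := hn (Pn n) e2 e3.
  exact: lt_le_trans (gr _ e4) f4.
have mono2 : forall m n, (m < n)%N -> `|evC z (Pn m)| < `|evC z (Pn n)|.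
  move=> m; elim=> [//|n IH]; rewrite ltnS leq_eqVlt => /orP[/eqP -> //|/IH h].
  exact: lt_trans h (mono n).
have inj : injective (fun n => iter n F x).
  have key : forall m n, (m < n)%N -> iter m F x <> iter n F x.
    move=> m n mn; have [a1 _ _ _] := inv m; have [a2 _ _ _] := inv n.
    rewrite a1 a2 => ee.
    have : evR beta (Pn m - Pn n) = 0.
      by move: ee; rewrite /evR rmorphB /= !hornerE => ->; rewrite subrr.
    move/(@wd_root R p beta _ irr rb) => /(_ z rz).
    rewrite rmorphB /= !hornerE => /eqP; rewrite subr_eq0 => /eqP e'.
    by have := mono2 m n mn; rewrite /evC e' ltxx.
  move=> m n /= emn; case: (ltngtP m n) => // h.
    by case: (key m n h).
  by case: (key n m h).
exists x; split => //.
  by exists P0.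
exact: injective_infinite inj.
Qed.

Lemma coef_bound (R : realType) (rs : seq R[i]) (W : R[i]) :
  uniq rs -> 0 <= W ->
  exists Kc : R[i], 0 <= Kc /\ forall c : {poly int}, (size c <= size rs)%N ->
    (forall r, r \in rs -> `|(map_poly intr c).[r]| <= W) ->
    forall i, `|(c`_i)%:~R : R[i]| <= Kc.
Proof.
move=> urs W0; set d := size rs.
set V : 'M[R[i]]_d := Vandermonde d (\row_(j < d) rs`_j).
have Vu : V \in unitmx.
  rewrite unitmxE unitfE det_Vandermonde; apply/prodf_neq0 => i _.
  apply/prodf_neq0 => j ij; rewrite !mxE subr_eq0 nth_uniq //.
  by apply/eqP => e; move: ij; rewrite e ltnn.
set T := \sum_(i < d) \sum_(j < d) `|invmx V j i|.
have T0 : 0 <= T by apply: sumr_ge0 => i _; apply: sumr_ge0.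
exists (W * T); split; first exact: mulr_ge0.
move=> c sc hW i.
case: (ltnP i d) => id; last first.
  rewrite nth_default; last by apply: leq_trans sc id.
  by rewrite normr0 mulr_ge0.
set v : 'rV[R[i]]_d := \row_(k < d) ((c`_k)%:~R : R[i]).
have vV : forall j : 'I_d, (v *m V) 0 j = (map_poly intr c).[rs`_j].
  move=> j; rewrite mxE (horner_coef_wide _ (n := d)); last by rewrite size_map_inj_poly //; exact: intr_inj.
  by apply: eq_bigr => k _; rewrite !mxE coef_map.
have -> : ((c`_i)%:~R : R[i]) = v 0 (Ordinal id) by rewrite mxE.
rewrite -(mulmxK Vu v) mxE.
apply: le_trans (ler_norm_sum _ _ _) _.
apply: (@le_trans _ _ (\sum_(j < d) W * `|invmx V j (Ordinal id)|)).
  apply: ler_sum => j _; rewrite normrM vV ler_wpM2r //.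
  by apply: hW; apply: mem_nth.
rewrite -mulr_sumr ler_wpM2l //.
rewrite /T [X in _ <= X](bigD1 (Ordinal id)) //= lerDl.
by apply: sumr_ge0 => k _; apply: sumr_ge0.
Qed.

Lemma finite_int_polys (d N : nat) :
  finite_set [set c : {poly int} | (size c <= d)%N /\ forall i, `|c`_i| < N%:Z].
Proof.
set g := fun f : {ffun 'I_d -> 'I_(N.*2.+1)} => \poly_(i < d) (if @insub nat (fun k => (k < d)%N) 'I_d i is Some k then (f k : nat)%:Z - N%:Z else 0).
apply: (@sub_finite_set _ _ (g @` setT)); last by apply: finite_image.
move=> c [sc hc].
exists [ffun i : 'I_d => inord (absz (c`_i + N%:Z))] => //.
apply/polyP => i; rewrite coef_poly.
case: ltnP => id; last by rewrite nth_default //; apply: leq_trans sc id.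
have hci := hc i; move: hci; rewrite ltr_norml => /andP[h1 h2].
have h0 : 0 <= c`_i + N%:Z by rewrite -lerBlDr sub0r ltW.
rewrite (insubT (fun k => (k < d)%N) id) ffunE inordK.
  by rewrite gez0_abs // addrK.
rewrite ltnS -(ler_nat int) natz gez0_abs // -addnn natrD.
by apply: lerD; rewrite natz // ltW.
Qed.

Lemma eval_mod (S : comNzRingType) (p c : {poly int}) (x : S) :
  p \is monic -> root (map_poly intr p) x ->
  (map_poly intr c).[x] = (map_poly intr (c %% p)).[x].
Proof.
move=> mp rx.
rewrite {1}(Pdiv.IdomainMonic.divp_eq mp c) rmorphD rmorphM /= !hornerE.
by move/eqP: rx => ->; rewrite mulr0 add0r.
Qed.

Lemma finite_bounded (R : realType) (p : {poly int}) (beta : R) (rs : seq R[i]) (W : R[i]) :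
  p \is monic -> root (map_poly (intr : int -> R) p) beta -> uniq rs ->
  size rs = (size p).-1 ->
  (forall z, root (map_poly (intr : int -> R[i]) p) z = (z \in rs)) -> 0 <= W ->
  finite_set [set t : R | exists c : {poly int}, t = (map_poly intr c).[beta] /\
     forall r, r \in rs -> `|(map_poly intr c).[r]| <= W].
Proof.
move=> mp rb urs srs hrs W0.
have [Kc [Kc0 hKc]] := coef_bound urs W0.
have [N hN] := exists_nat_gtC Kc0.
apply: (@sub_finite_set _ _ ((fun c : {poly int} => (map_poly intr c).[beta]) @`
   [set c : {poly int} | (size c <= size rs)%N /\ forall i, `|c`_i| < N%:Z])); last first.
  by apply: finite_image; apply: finite_int_polys.
move=> t [c [-> hc]].
have sc : (size (c %% p)%R <= size rs)%N.
  have := ltn_modpN0 c (monic_neq0 mp); rewrite srs.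
  by case: (size p) => [|n] //=.
have hc' : forall r, r \in rs -> `|(map_poly intr (c %% p)).[r]| <= W.
  by move=> r rr; rewrite -eval_mod // ?hrs //; apply: hc.
exists (c %% p); last by rewrite -eval_mod.
split => // i.
have := hKc _ sc hc' i => h.
have : (`|(c %% p)`_i|%:~R : R[i]) < N%:R by rewrite intr_norm; apply: le_lt_trans h hN.
by rewrite pmulrn ltr_int.
Qed.

Lemma int_rep (R : realType) (beta t : R) : inQbeta beta t ->
  exists a : int, a != 0 /\ exists c : {poly int}, a%:~R * t = (map_poly intr c).[beta].
Proof.
case=> q ->; have [c [a a0 ->]] := rat_poly_scale q.
exists a; split => //; exists c.
rewrite map_polyZ hornerZ map_int_rat fmorphV rmorph_int mulrA mulfV ?mul1r //.
by rewrite intr_eq0.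
Qed.

Lemma ys_int_rep (R : realType) (beta : R) l (ys : nat -> R) :
  (forall j, (1 <= j <= l)%N -> inQbeta beta (ys j)) ->
  exists ay : nat -> int, exists cy : nat -> {poly int}, forall j,
    ay j != 0 /\ ((1 <= j <= l)%N -> (ay j)%:~R * ys j = (map_poly intr (cy j)).[beta]).
Proof.
move=> hy.
have : forall j, exists ac : int * {poly int},
    ac.1 != 0 /\ ((1 <= j <= l)%N -> (ac.1)%:~R * ys j = (map_poly intr ac.2).[beta]).
  move=> j; case: (boolP (1 <= j <= l)%N) => h.
    by have [a [a0 [c hc]]] := int_rep (hy j h); exists (a, c).
  by exists (1, 0).
case/choice => f hf; exists (fun j => (f j).1), (fun j => (f j).2) => j.
exact: hf.
Qed.

Lemma mapC_real (R : realType) (c : {poly int}) (b : R) :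
  (map_poly (intr : int -> R[i]) c).[(b%:C)%C] = (((map_poly intr c).[b])%:C)%C.
Proof.
rewrite -(horner_map (real_complex R : {rmorphism R -> R[i]})) -map_poly_comp.
by congr (_.[_]); apply: eq_map_poly => a /=; rewrite rmorph_int.
Qed.

Lemma part1 (R : realType) (p : {poly int}) (beta B : R) l xs ys F :
  p \is monic ->
  irreducible_poly (map_poly (intr : int -> rat) p) ->
  root (map_poly (intr : int -> R) p) beta ->
  gen_beta_transf beta B l xs ys F ->
  (forall j, (1 <= j <= l)%N -> inQbeta beta (ys j)) ->
  (forall z : R[i], root (map_poly (intr : int -> R[i]) p) z -> z != (beta%:C)%C ->
       `|z| < 1) ->
  forall x, inQbeta beta x -> 0 <= x -> x < B ->
       finite_set (range (fun n : nat => iter n F x)).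
Proof.
move=> mp irr rb gb hy hz x hx x0 xB.
have [rs [urs srs hrs]] := @roots_exist R p mp irr.
have [_ _ _ _ gb5] := gb.
have [ax [ax0 [cx hcx]]] := int_rep hx.
have [ay [cy hay]] := ys_int_rep hy.
set D := ax * \prod_(j < l.+1) ay j.
have D0 : D != 0.
  rewrite mulf_neq0 //; apply/prodf_neq0 => j _; exact: (hay j).1.
set e := fun j : nat => (ax * \prod_(i < l.+1 | (i : nat) != j) ay i) *: cy j.
have he : forall j, (1 <= j <= l)%N -> (map_poly intr (e j)).[beta] = D%:~R * ys j.
  move=> j jl; have jlt : (j < l.+1)%N by case/andP: jl.
  rewrite /e map_polyZ hornerZ -(hay j).2 // mulrA -intrM /D.
  rewrite [in RHS](bigD1 (Ordinal jlt)) //= -mulrA [_ * ay j]mulrC.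
  by congr ((ax * (ay j * _))%:~R * _); apply: eq_bigl => i.
set c0 := (\prod_(j < l.+1) ay j) *: cx.
have hc0 : (map_poly intr c0).[beta] = D%:~R * x.
  by rewrite map_polyZ hornerZ -hcx mulrA -intrM /D; congr (_%:~R * _); exact: mulrC.
set Yz := fun z : R[i] => \sum_(j < l.+1) `|(map_poly intr (e j)).[z]|.
set Kz := fun z : R[i] => `|(map_poly intr c0).[z]| + Yz z / (1 - `|z|).
have inv : forall n, [/\ 0 <= iter n F x, iter n F x < B &
    exists c : {poly int}, D%:~R * iter n F x = (map_poly intr c).[beta] /\
      forall z, root (map_poly (intr : int -> R[i]) p) z -> z != (beta%:C)%C ->
        `|(map_poly intr c).[z]| <= Kz z].
  elim=> [|n [t0 tB [c [hc hb]]]].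
    split => //; exists c0; split => // z rz zb.
    rewrite /Kz lerDl; apply: divr_ge0; first by apply: sumr_ge0.
    by rewrite subr_ge0 ltW // hz.
  have [j [jl h1 h2]] := interval_index gb t0 tB.
  have [a1 [a2 a3]] := gb5 j _ jl h1 h2.
  rewrite iterS a3; split => //.
  exists ('X * c - e j); split.
    rewrite rmorphB /= [map_poly _ (_ * c)]rmorphM /= map_polyX !hornerE he // -hc; ring.
  move=> z rz zb.
  have z1 := hz z rz zb.
  rewrite rmorphB rmorphM /= map_polyX !hornerE.
  apply: le_trans (ler_normB _ _) _.
  have jlt : (j < l.+1)%N by case/andP: jl.
  have hej : `|(map_poly intr (e j)).[z]| <= Yz z.
    rewrite /Yz (bigD1 (Ordinal jlt)) //= lerDl.
    by apply: sumr_ge0.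
  rewrite normrM; apply: le_trans (lerD (ler_wpM2l (normr_ge0 z) (hb z rz zb)) hej) _.
  have u0 : 0 < 1 - `|z| by rewrite subr_gt0.
  have u0' : 1 - `|z| != 0 by rewrite gt_eqF.
  rewrite -subr_ge0.
  have -> : Kz z - (`|z| * Kz z + Yz z) = (1 - `|z|) * `|(map_poly intr c0).[z]|.
    by rewrite /Kz; field.
  by rewrite mulr_ge0 // ltW.
have B0 : 0 <= B by apply: ltW; apply: le_lt_trans x0 xB.
set W := ((`|(D%:~R : R)| * B)%:C)%C + \sum_(r <- rs) `|Kz r|.
have S0 : 0 <= \sum_(r <- rs) `|Kz r| by apply: sumr_ge0.
have W0 : 0 <= W by rewrite addr_ge0 // ler0c mulr_ge0.
have fin := finite_bounded mp rb urs srs hrs W0.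
apply: (sub_finite_set _ (finite_image (fun s => s / (D%:~R : R)) fin)).
move=> t [n _ <-]; have [t0 tB [c [hc hb]]] := inv n.
exists ((map_poly intr c).[beta]); last first.
  by rewrite /= -hc mulrC mulKf // intr_eq0.
exists c; split => // r rr.
case: (eqVneq r (beta%:C)%C) => [->|rb'].
  rewrite mapC_real -hc normC_real.
  apply: (@le_trans _ _ ((`|(D%:~R : R)| * B)%:C)%C); last by rewrite /W lerDl.
  rewrite lecR normrM ler_wpM2l // ger0_norm // ltW //.
have rr' : root (map_poly (intr : int -> R[i]) p) r by rewrite hrs.
apply: le_trans (hb r rr' rb') _.
apply: le_trans (real_ler_norm _) _.
  apply: realD; first exact: normr_real.
  apply: realM; first by apply: ger0_real; apply: sumr_ge0.
  by rewrite realV; apply: realB; [exact: real1 | exact: normr_real].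
apply: (@le_trans _ _ (\sum_(r <- rs) `|Kz r|)); last by rewrite /W lerDr ler0c mulr_ge0.
rewrite (bigD1_seq r) //= lerDl; apply: sumr_ge0 => i _ //.
Qed.


Unset Implicit Arguments.

Theorem theorem3p1 (R : realType) (p : {poly int}) (beta : R)
    (B : R) (l : nat) (xs ys : nat -> R) (F : R -> R) :
  p \is monic ->
  (1 < (size p).-1)%N ->
  irreducible_poly (map_poly (intr : int -> rat) p) ->
  root (map_poly (intr : int -> R) p) beta ->
  1 < beta ->
  gen_beta_transf beta B l xs ys F ->
  (forall j, (j <= l)%N -> inQbeta beta (xs j)) ->
  (forall j, (1 <= j <= l)%N -> inQbeta beta (ys j)) ->
  ((forall z : R[i], root (map_poly (intr : int -> R[i]) p) z -> z != (beta%:C)%C ->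
       `|z| < 1) ->
     forall x, inQbeta beta x -> 0 <= x -> x < B ->
       finite_set (range (fun n : nat => iter n F x)))
  /\
  ((exists z : R[i], [/\ root (map_poly (intr : int -> R[i]) p) z,
       z != (beta%:C)%C & 1 < `|z|]) ->
     exists x, [/\ inQbeta beta x, 0 <= x, x < B &
       infinite_set (range (fun n : nat => iter n F x))]).
Proof.
move=> mp dp irr rb b1 gb hx hy; split.
  by move=> hz; exact: (part1 mp irr rb gb hy hz).
by case=> z [rz zb z1]; exact: (part2 irr rb gb hx hy rz zb z1).
Qed.
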